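(* Let $q$ be an odd prime power and $s=(q-1)/2$. Let $r_0,r_1$ be positive integers such that $s\mid r_0^2-1$ and $2s\mid r_1^2-1$. Then $$f(x)=\tfrac12 x^{r_0}(1+x^s)+\tfrac12 x^{r_1}(1-x^s)$$ is a permutation polynomial of $\mathbb{F}_q$ and is self-inverse, i.e. $f(f(c))=c$ for all $c\in\mathbb{F}_q$.
   Context: A polynomial $f\in\mathbb{F}_q[x]$ is a permutation polynomial of $\mathbb{F}_q$ if it induces a bijection of $\mathbb{F}_q$. *)

(* Defs.v *)
From HB Require Import structures.
From mathcomp Require Import all_boot all_order all_algebra all_field.
Set Implicit Arguments. Unset Strict Implicit. Unset Printing Implicit Defensive.
Import GRing.Theory.
Local Open Scope ring_scope.

Definition permutation_poly (F : finFieldType) (f : {poly F}) : Prop :=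
  bijective (fun x : F => f.[x]).

Definition cor42_poly (F : finFieldType) (s r0 r1 : nat) : {poly F} :=
  (2%:R)^-1 *: ('X^r0 * (1 + 'X^s)) + (2%:R)^-1 *: ('X^r1 * (1 - 'X^s)).

(* Main.v *)
Require Import Defs.
From HB Require Import structures.
From mathcomp Require Import all_boot all_order all_algebra all_field.
Local Open Scope ring_scope.
Import GRing.Theory.

Lemma two_neq0 (F : finFieldType) : odd #|F| -> (2%:R : F) != 0.
Proof.
move=> oF; apply/negP => /eqP h2.
have ch : (2%N \in [pchar F]) by rewrite inE /= h2 eqxx.
have := card_pprimeChar ch.
set n := logn _ _ => hc.
have gt1 := finNzRing_gt1 F.
move: oF gt1; rewrite [#|F|]hc.
by case: n hc => [|n] _ //; rewrite expnS oddM.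
Qed.

Theorem corollary4p2 (F : finFieldType) (s r0 r1 : nat) :
  odd #|F| ->
  s = (#|F|.-1)./2 ->
  (0 < r0)%N -> (0 < r1)%N ->
  (s %| r0 ^ 2 - 1)%N -> (s.*2 %| r1 ^ 2 - 1)%N ->
  permutation_poly (cor42_poly F s r0 r1) /\
  (forall c : F, (cor42_poly F s r0 r1).[(cor42_poly F s r0 r1).[c]] = c).
Proof.
move=> oF hs r0p r1p d0 d1.
have h2 := two_neq0 F oF.
have hq : #|F| = (s.*2).+1.
  have := finNzRing_gt1 F; rewrite hs.
  case: #|F| oF => [|[|q]] //= oq _.
  rewrite -[in LHS](odd_double_half q.+1) /=.
  by rewrite negbK in oq; rewrite oq.
have ev (c : F) : (cor42_poly F s r0 r1).[c] =
    2%:R^-1 * (c ^+ r0 * (1 + c ^+ s)) + 2%:R^-1 * (c ^+ r1 * (1 - c ^+ s)).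
  by rewrite /cor42_poly !hornerE.
have pw (c : F) : c != 0 -> c ^+ s.*2 = 1.
  move=> cn0; have := expf_card c; rewrite hq exprS => hh.
  by rewrite -[c ^+ _](mulKf cn0) hh mulVf.
have E1 (c : F) : c ^+ s = 1 -> (cor42_poly F s r0 r1).[c] = c ^+ r0.
  move=> h; rewrite ev h subrr !mulr0 addr0 -[1 + 1]/(2%:R).
  by rewrite mulrC -mulrA mulfV // mulr1.
have Em1 (c : F) : c ^+ s = -1 -> (cor42_poly F s r0 r1).[c] = c ^+ r1.
  move=> h; rewrite ev h subrr !mulr0 add0r opprK -[1 + 1]/(2%:R).
  by rewrite mulrC -mulrA mulfV // mulr1.
have inv : forall c : F, (cor42_poly F s r0 r1).[(cor42_poly F s r0 r1).[c]] = c.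
  move=> c.
  have [->|cn0] := eqVneq c 0.
    have f0 : (cor42_poly F s r0 r1).[0] = 0.
      by rewrite ev !expr0n /= (gtn_eqF r0p) (gtn_eqF r1p) !mul0r !mulr0 addr0.
    by rewrite !f0.
  have : (c ^+ s) ^+ 2 == 1 by rewrite -exprM muln2 pw.
  rewrite sqrf_eq1 => /orP [/eqP h | /eqP h].
  - have h' : (c ^+ r0) ^+ s = 1 by rewrite -exprM mulnC exprM h expr1n.
    rewrite E1 // E1 // -exprM.
    have [k hk] := dvdnP d0.
    have -> : (r0 * r0 = (k * s).+1)%N.
      by rewrite -hk mulnn subn1 prednK // expn_gt0 r0p.
    by rewrite exprS mulnC exprM h expr1n mulr1.
  - have [k hk] := dvdnP d1.
    have hr : (r1 * r1 = (k * s).*2.+1)%N.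
      by rewrite doubleMr -hk mulnn subn1 prednK // expn_gt0 r1p.
    have o : odd r1.
      by have := congr1 odd hr; rewrite oddM /= odd_double andbb.
    have h' : (c ^+ r1) ^+ s = -1.
      by rewrite -exprM mulnC exprM h -signr_odd o expr1.
    rewrite Em1 // Em1 // -exprM hr exprS doubleMr mulnC exprM.
    by rewrite pw // expr1n mulr1.
split=> //.
exists (fun c => (cor42_poly F s r0 r1).[c]) => c; exact: inv.
Qed.
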